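(* Let $q:\mathsf D\to\mathbb R$ be a query with sensitivity $\Delta q\in(0,\infty)$, and let $\Lambda$ be a random variable with support in $(0,\infty)$ and $\mathbb E[\Lambda]<\infty$, with MGF $M_\Lambda(t)=\mathbb E[e^{t\Lambda}]$. Then the Randomized DP Laplace mechanism $\mathcal M_q$ with reciprocal scale $\Lambda$ is $\epsilon$-differentially private with $$\epsilon=\ln\left[\frac{\mathbb E(\Lambda)}{M_\Lambda'(-\Delta q)}\right],\qquad M'_\Lambda(-\Delta q)=\frac{d M_\Lambda(t)}{dt}\Big|_{t=-\Delta q}=\mathbb E\big[\Lambda e^{-\Delta q\,\Lambda}\big].$$
   Context: Databases form a set $\mathsf D$ with a symmetric adjacency relation $\mathrm{Adj}$. The sensitivity of $q:\mathsf D\to\mathbb R$ is $\Delta q=\sup\{|q(d)-q(d')|:\mathrm{Adj}(d,d')\}$. A randomized mechanism $M$ is $\epsilon$-differentially private if $\mathbb P(M(d)\in S)\le e^{\epsilon}\mathbb P(M(d')\in S)$ for all adjacent $d,d'$ and all Borel sets $S$. The Randomized DP Laplace mechanism with reciprocal-scale distribution $\Lambda$ (a random variable with values in $(0,\infty)$, playing the role of $1/b$ for the Laplace scale $b$) is defined by $\mathcal M_q(d)=q(d)+W$, where conditionally on $\Lambda=\lambda$ the noise $W$ is Laplace with mean $0$ and scale $1/\lambda$, i.e. has density $\frac{\lambda}{2}e^{-\lambda|w|}$; the pair $(\Lambda,W)$ is drawn independently of $d$. *)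

(* Defs.v *)
From HB Require Import structures.
From mathcomp Require Import all_boot all_order all_algebra.
From mathcomp Require Import all_classical all_reals all_analysis.
Set Implicit Arguments. Unset Strict Implicit. Unset Printing Implicit Defensive.
Import Order.TTheory GRing.Theory Num.Theory.
Local Open Scope classical_set_scope.
Local Open Scope ring_scope.

Definition laplace_pdf {R : realType} (l m w : R) : R :=
  l / 2 * expR (- (l * `|w - m|)).

(* Law of the Randomized DP Laplace mechanism M_q(d) = q d + W, where
   Lambda ~ mu and, conditionally on Lambda = l, W ~ Laplace(0, 1/l):
   P(M_q(d) \in S) = \int_{l>0} \int_S laplace_pdf l (q d) w dw dmu(l). *)
Definition rdp_laplace_prob {R : realType} {D : Type}
  (mu : probability R R) (q : D -> R) (d : D) (S : set R) : \bar R :=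
  (\int[mu]_(l in `]0%R, +oo[%classic)
     (\int[lebesgue_measure]_(w in S) (laplace_pdf l (q d) w)%:E))%E.

Definition rdp_laplace_dp {R : realType} {D : Type} (Adj : D -> D -> Prop)
  (mu : probability R R) (q : D -> R) (eps : R) : Prop :=
  forall d d', Adj d d' -> forall S : set R, measurable S ->
    (rdp_laplace_prob mu q d S <= (expR eps)%:E * rdp_laplace_prob mu q d' S)%E.

Definition sensitivity {R : realType} {D : Type} (Adj : D -> D -> Prop)
  (q : D -> R) : \bar R :=
  ereal_sup [set x : \bar R | exists d d', Adj d d' /\ x = (`|q d - q d'|)%:E].

(* Main.v *)
Require Import Defs.
From HB Require Import structures.
From mathcomp Require Import all_boot all_order all_algebra.
From mathcomp Require Import all_classical all_reals all_analysis.
From mathcomp Require Import ring lra measurable_realfun.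
Import Order.TTheory GRing.Theory Num.Theory.
Local Open Scope classical_set_scope.
Local Open Scope ring_scope.

Section S.
Context {R : realType}.
Definition P0 : set R := `]0%R, +oo[%classic.
Lemma mP0 : measurable P0. Proof. exact: measurable_itv. Qed.

Definition kf (t l : R) := l * expR (- (t * l)).

Lemma mkf t : measurable_fun setT (kf t).
Proof.
apply: measurable_realfun.measurable_funM => //.
apply: measurableT_comp => //.
apply: measurableT_comp => //.
Qed.

Lemma mpdf (m : R) : measurable_fun setT (fun z : R * R => z.1 / 2 * expR (- (z.1 * `|z.2 - m|))).
Proof.
apply: measurable_realfun.measurable_funM.
  by apply: measurable_realfun.measurable_funM.
apply: measurableT_comp => //.
apply: measurableT_comp => //.
apply: measurable_realfun.measurable_funM => //.
apply: measurableT_comp => //.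
apply: measurable_realfun.measurable_funB => //.
Qed.

Variable mu : probability R R.
Hypothesis hP : mu P0 = 1%E.
Hypothesis hI : mu.-integrable setT (fun l : R => l%:E).

Lemma muC : mu (~` P0) = 0%E.
Proof. by rewrite probability_setC ?hP ?subee //; exact: mP0. Qed.

Lemma intdom (h : R -> R) (C : R) : measurable_fun setT h ->
  (forall l, P0 l -> `|h l| <= C * l) -> mu.-integrable P0 (EFin \o h).
Proof.
move=> mh hC.
have iP : mu.-integrable P0 (fun l : R => l%:E).
  exact: (integrableS measurableT mP0 _ hI).
apply: (@le_integrable _ _ _ mu P0 mP0 _ (fun l => C%:E * l%:E)%E).
- apply/measurable_EFinP. exact: (measurable_funS measurableT _ mh).
- move=> l Pl /=. rewrite lee_fin. apply: (le_trans (hC l Pl)).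
  exact: ler_norm.
- exact: integrableZl mP0 _ _ iP.
Qed.


Lemma P0gt0 l : P0 l -> 0 < l.
Proof. by rewrite /P0 /= in_itv /= andbT. Qed.

Lemma kf_le t l : 0 <= t -> P0 l -> `|kf t l| <= 1 * l.
Proof.
move=> t0 /P0gt0 l0; rewrite mul1r /kf normrM gtr0_norm // ger0_norm ?expR_ge0 //.
by rewrite ger_pMr // expR_le1 oppr_le0 mulr_ge0 // ltW.
Qed.

Lemma intK t : 0 <= t -> mu.-integrable P0 (EFin \o kf t).
Proof. by move=> t0; apply: (@intdom _ 1) => // [|l Pl]; [exact: mkf|exact: kf_le]. Qed.

Definition K t := Rintegral mu P0 (kf t).

Lemma Rint_setT f : mu.-integrable setT (EFin \o f) ->
  Rintegral mu setT f = Rintegral mu P0 f.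
Proof.
move=> If; rewrite /Rintegral (negligible_integral _ measurableT If muC).
  by rewrite setTD setCK.
by apply: measurableC; exact: mP0.
Qed.

Lemma Rint_pos f : mu.-integrable P0 (EFin \o f) -> (forall l, P0 l -> 0 < f l) ->
  0 < Rintegral mu P0 f.
Proof.
move=> If fpos.
have : 0 <= Rintegral mu P0 f by apply: Rintegral_ge0 => l /fpos /ltW.
rewrite le_eqVlt => /predU1P[h|//]; exfalso.
have fin := integrable_fin_num mP0 If.
have h1 : (\int[mu]_(x in P0) (EFin \o f) x = 0)%E.
  by rewrite -(fineK fin) -[fine _]/(Rintegral mu P0 f) -h.
have h0 : (\int[mu]_(x in P0) `|(EFin \o f) x| = 0)%E.
  rewrite -h1; apply: eq_integral.
  by move=> x /[1!inE] /fpos /ltW f0 /=; rewrite ger0_norm.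
have mf : measurable_fun P0 (EFin \o f) by case/integrableP: If.
move: h0 => /(ae_eq_integral_abs mu mP0 mf).
rewrite /ae_eq => -[N [mN N0 sub]].
have PN : P0 `<=` N.
  move=> x Px; apply: sub => /= /(_ Px) [] /eqP.
  by rewrite gt_eqF // fpos.
have : (mu P0 <= mu N)%E by apply: le_measure => //; rewrite inE //; exact: mP0.
by rewrite hP N0 lee_fin ler10.
Qed.


Lemma Kpos t : 0 <= t -> 0 < K t.
Proof.
move=> t0; apply: Rint_pos; first exact: intK.
by move=> l /P0gt0 l0; rewrite /kf mulr_gt0 // expR_gt0.
Qed.

Lemma Kmono s t : 0 <= s -> s <= t -> K t <= K s.
Proof.
move=> s0 st; apply: le_Rintegral; [exact: mP0|exact: intK (le_trans s0 st)|exact: intK|].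
move=> l /P0gt0 l0; rewrite /kf (ler_wpM2l (ltW l0)) // ler_expR lerN2 (ler_wpM2r (ltW l0)) //.
Qed.

Lemma intDR f g : mu.-integrable P0 (EFin \o f) -> mu.-integrable P0 (EFin \o g) ->
  mu.-integrable P0 (EFin \o (fun l => f l + g l)).
Proof.
move=> If Ig; rewrite (_ : EFin \o _ = ((EFin \o f) \+ (EFin \o g))%E).
  exact: (integrableD mP0 If Ig).
by apply/funext => x /=; rewrite EFinD.
Qed.

Lemma intZR k f : mu.-integrable P0 (EFin \o f) ->
  mu.-integrable P0 (EFin \o (fun l => k * f l)).
Proof.
move=> If; rewrite (_ : EFin \o _ = (fun x => k%:E * (EFin \o f) x)%E).
  exact: integrableZl mP0 _ _ If.
by apply/funext => x /=; rewrite EFinM.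
Qed.

Arguments intDR {f g}.
Arguments intZR k {f}.

Lemma cheb c D : 0 <= c -> 0 < D -> K c * K D <= K 0 * K (c + D).
Proof.
move=> c0 D0.
have K0p : 0 < K 0 := @Kpos 0 (lexx 0).
have KDp : 0 < K D := @Kpos D (ltW D0).
pose m := K D / K 0.
have m0 : 0 < m by rewrite divr_gt0.
pose l0 := - ln m / D.
pose a := expR (- (c * l0)).
have em : expR (- (D * l0)) = m.
  have -> : - (D * l0) = ln m by rewrite /l0; field; exact: lt0r_neq0.
  by rewrite lnK // posrE.
have pw : forall l, P0 l ->
    a * kf D l + m * kf c l + - (a * m) * kf 0 l <= kf (c + D) l.
  move=> l /P0gt0 lp; rewrite /kf.
  have -> : expR (- ((c + D) * l)) = expR (- (c * l)) * expR (- (D * l)).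
    by rewrite -expRD; congr expR; ring.
  have -> : expR (- (0 * l)) = 1 by rewrite mul0r oppr0 expR0.
  have key : 0 <= (expR (- (c * l)) - a) * (expR (- (D * l)) - m).
    rewrite -em /a; case: (leP l l0) => hl.
    - apply: mulr_ge0; rewrite subr_ge0 ler_expR lerN2.
        nra.
      nra.
    - rewrite -mulrNN; apply: mulr_ge0; rewrite oppr_ge0 subr_le0 ler_expR lerN2.
        nra.
      nra.
  rewrite -subr_ge0.
  set x := expR (- (c * l)) in key *; set y := expR (- (D * l)) in key *.
  have -> : l * (x * y) - (a * (l * y) + m * (l * x) + - (a * m) * (l * 1))
      = l * ((x - a) * (y - m)) by ring.
  by rewrite mulr_ge0 // ltW.
have ID := @intK D (ltW D0); have Ic := @intK c c0; have I0 := @intK 0 (lexx 0).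
have h := le_Rintegral mP0 (intDR (intDR (intZR a ID) (intZR m Ic)) (intZR (- (a * m)) I0))
  (@intK (c + D) (addr_ge0 c0 (ltW D0))) pw.
rewrite (RintegralD mP0 (intDR (intZR a ID) (intZR m Ic)) (intZR (- (a * m)) I0)) in h.
rewrite (RintegralD mP0 (intZR a ID) (intZR m Ic)) in h.
rewrite (RintegralZl (f := kf D) a mP0 ID) (RintegralZl (f := kf c) m mP0 Ic) (RintegralZl (f := kf 0) _ mP0 I0) in h.
rewrite -/(K D) -/(K c) -/(K 0) -/(K (c + D)) in h.
have -> : K c * K D = K 0 * (a * K D + m * K c + - (a * m) * K 0).
  by rewrite /m; field; exact: lt0r_neq0.
by rewrite ler_wpM2l // ltW.
Qed.


Lemma core (Dq a b : R) : 0 < Dq -> 0 <= a -> 0 <= b -> a <= b + Dq ->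
  K b * K Dq <= K 0 * K a.
Proof.
move=> D0 a0 b0 ab.
have KDp := @Kpos Dq (ltW D0).
have K0p := @Kpos 0 (lexx 0).
case: (leP a Dq) => aD.
  apply: ler_pM; [exact: ltW (@Kpos b b0)|exact: ltW|exact: (@Kmono 0 b)|exact: (@Kmono a Dq a0 aD)].
- have c0 : 0 <= a - Dq by rewrite subr_ge0 ltW.
  have := @cheb (a - Dq) Dq c0 D0; rewrite subrK => h.
  apply: (le_trans _ h); apply: (ler_wpM2r (ltW KDp)).
  apply: (@Kmono (a - Dq) b c0).
  by rewrite lerBlDr.
Qed.


Lemma int_ind (nu : {measure set R -> \bar R}) (A : set R) (f : R -> R) :
  (\int[nu]_l ((f l) * \1_A l)%:E = \int[nu]_(l in A) (f l)%:E)%E.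
Proof.
rewrite [RHS]integral_mkcond; apply: eq_integral => l _.
by rewrite patchE indicE; case: ifP => _; rewrite ?mulr1 ?mulr0.
Qed.

Definition H (m : R) (S : set R) (z : R * R) : \bar R :=
  ((laplace_pdf z.1 m z.2 * \1_P0 z.1) * \1_S z.2)%:E.

Lemma mH m (S : set R) : measurable S -> measurable_fun setT (H m S).
Proof.
move=> mS; apply/measurable_EFinP.
apply: measurable_realfun.measurable_funM.
  apply: measurable_realfun.measurable_funM; first exact: mpdf.
  apply: measurableT_comp => //; apply: measurable_indic; exact: mP0.
apply: measurableT_comp => //; apply: measurable_indic; exact: mS.
Qed.

Lemma ind_ge0 (A : set R) (x : R) : 0 <= (\1_A x : R).
Proof. by rewrite indicE; case: (x \in A). Qed.

Lemma H0 m (S : set R) z : (0 <= H m S z)%E.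
Proof.
rewrite /H lee_fin; apply: mulr_ge0; last exact: ind_ge0.
rewrite /laplace_pdf indicE; case: (boolP (z.1 \in P0)) => /= [/[1!inE] /P0gt0 h|_]; last by rewrite mulr0.
by rewrite mulr1 mulr_ge0 ?divr_ge0 ?expR_ge0 // ltW.
Qed.

Lemma swap m (S : set R) : measurable S ->
  (\int[mu]_(l in P0) \int[lebesgue_measure]_(w in S) (laplace_pdf l m w)%:E
  = \int[lebesgue_measure]_w \int[mu]_l H m S (l, w))%E.
Proof.
move=> mS; rewrite -(@fubini_tonelli _ _ _ _ _ mu lebesgue_measure (H m S) (@mH m S mS) (@H0 m S)).
rewrite integral_mkcond; apply: eq_integral => l _.
rewrite patchE; case: ifPn => lP.
  rewrite integral_mkcond; apply: eq_integral => w _.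
  by rewrite /H /= patchE !indicE lP mulr1; case: ifP => _; rewrite ?mulr1 ?mulr0.
rewrite (eq_integral (fun _ => 0%E)) ?integral0 // => w _.
by rewrite /H /= indicE (negbTE lP) mulr0 mul0r.
Qed.

Lemma Gform m (S : set R) w : (\int[mu]_l H m S (l, w) = ((K `|w - m| / 2) * \1_S w)%:E)%E.
Proof.
rewrite (eq_integral (fun l => (((\1_S w / 2) * kf `|w - m| l) * \1_P0 l)%:E)); last first.
  by move=> l _; rewrite /H /laplace_pdf /kf /= (mulrC l `|w - m|); congr EFin; ring.
rewrite int_ind -(fineK (integrable_fin_num mP0 (intZR (\1_S w / 2) (@intK `|w - m| (normr_ge0 _))))).
rewrite -/(Rintegral mu P0 _) (RintegralZl (f := kf `|w - m|) _ mP0 (@intK _ (normr_ge0 _))).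
by congr EFin; rewrite /K; ring.
Qed.


Lemma Rint_setT2 f : measurable_fun setT f -> mu.-integrable P0 (EFin \o f) ->
  Rintegral mu setT f = Rintegral mu P0 f.
Proof.
move=> mf IP; apply: Rint_setT.
have mC : measurable (~` P0) by apply: measurableC; exact: mP0.
apply/(negligible_integrable mC measurableT _ muC).
  exact/measurable_EFinP.
by rewrite setTD setCK.
Qed.

Lemma mainS (D : Type) (Adj : D -> D -> Prop) (q : D -> R) (Dq : R) :
  sensitivity Adj q = Dq%:E -> 0 < Dq ->
  rdp_laplace_dp Adj mu q
    (ln (Rintegral mu setT (fun l => l) /
         Rintegral mu setT (fun l => l * expR (- (Dq * l))))).
Proof.
move=> hs D0.
have K0p := @Kpos 0 (lexx 0).
have KDp := @Kpos Dq (ltW D0).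
have eA : Rintegral mu setT (fun l => l) = K 0.
  rewrite Rint_setT; last exact: hI.
  by rewrite /K; apply: eq_Rintegral => l _; rewrite /kf mul0r oppr0 expR0 mulr1.
have eB : Rintegral mu setT (fun l => l * expR (- (Dq * l))) = K Dq.
  exact: (@Rint_setT2 (kf Dq) (mkf Dq) (@intK Dq (ltW D0))).
rewrite eA eB => d d' adj S mS.
rewrite lnK; last by rewrite posrE divr_gt0.
rewrite /rdp_laplace_prob !swap //.
have G0 m w : (0 <= \int[mu]_l H m S (l, w))%E.
  by apply: integral_ge0 => l _; exact: H0.
rewrite -ge0_integralZl //; last by rewrite lee_fin ltW // divr_gt0.
apply: ge0_le_integral => //.
- exact: (measurable_fun_fubini_tonelli_G (H (q d) S) (@mH (q d) S mS) (@H0 (q d) S)).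
- apply: measurable_funeM.
  exact: (measurable_fun_fubini_tonelli_G (H (q d') S) (@mH (q d') S mS) (@H0 (q d') S)).
- 

move=> w _; rewrite !Gform -EFinM lee_fin.
have sD : `|q d - q d'| <= Dq.
  rewrite -lee_fin -hs; apply: ereal_sup_ubound; exists d, d'; split => //.
have tri : `|w - q d'| <= `|w - q d| + Dq.
  rewrite (_ : w - q d' = (w - q d) + (q d - q d')); last by ring.
  by apply: (le_trans (ler_normD _ _)); rewrite lerD2l.
have hc := @core Dq _ _ D0 (normr_ge0 _) (normr_ge0 _) tri.
rewrite indicE; case: (w \in S); rewrite ?mulr1 ?mulr0 //.
rewrite -subr_ge0.
have -> : K 0 / K Dq * (K `|w - q d'| / 2) - K `|w - q d| / 2 =
    (K 0 * K `|w - q d'| - K `|w - q d| * K Dq) / (2 * K Dq).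
  by field; exact: lt0r_neq0.
by rewrite divr_ge0 ?subr_ge0 // mulr_ge0 // ltW.
exact: (measurable_fun_fubini_tonelli_G (H (q d') S) (@mH (q d') S mS) (@H0 (q d') S)).
Qed.

End S.

Theorem mainTheorem2 (R : realType) (D : Type) (Adj : D -> D -> Prop)
  (q : D -> R) (Dq : R) (mu : probability R R) :
  (forall d d', Adj d d' -> Adj d' d) ->
  sensitivity Adj q = Dq%:E -> 0 < Dq ->
  mu `]0%R, +oo[%classic = 1%E ->
  mu.-integrable setT (fun l : R => l%:E) ->
  rdp_laplace_dp Adj mu q
    (ln (Rintegral mu setT (fun l => l) /
         Rintegral mu setT (fun l => l * expR (- (Dq * l))))).
Proof.
move=> _ hs D0 hP hI.
exact: (@mainS R mu hP hI D Adj q Dq hs D0).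
Qed.
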